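(* Fix a context-free grammar $G=(N,\Sigma,P,S)$. Let $M=(V,E,L)$ be a finite directed edge-labeled graph with $L\subseteq\Sigma$, $E\subseteq V\times L\times V$, and no two parallel edges with the same label, and let $V_s,V_f\subseteq V$ be sets of start and final vertices. Then the binarized Shared Packed Parse Forest (SPPF) built by the GLL-based graph parsing algorithm (described in the context) on $G$ and $M$ has at most $O(|V|^3+|E|)$ nodes and at most $O(|V|^3+|E|)$ edges, the constants depending only on $G$.
   Context: Paths and queries: a path in $M$ is a sequence of edges $(v_0,l_0,v_1),(v_1,l_1,v_2),\dots,(v_{n-1},l_{n-1},v_n)$ with $n\ge 1$; its word is $l_0l_1\cdots l_{n-1}$. The goal of the algorithm is to represent all paths $p$ from a vertex of $V_s$ to a vertex of $V_f$ whose word belongs to $\mathcal{L}(G)$, the language generated by $G$. The GLL-based graph parsing algorithm: it is the table-driven generalized LL (GLL) parsing algorithm in which input positions are vertices of $M$ instead of indices into a string. A grammar slot is a production with a dot, $X\to\alpha\cdot\beta$. The algorithm maintains a graph-structured stack (GSS) whose nodes are labeled by pairs (grammar slot, vertex); descriptors $(L,u,i,w)$ with $L$ a grammar slot, $u$ a GSS node, $i\in V$ the current position and $w$ an SPPF node (or a dummy); a working set $R$ of descriptors to process, a set $U$ of all descriptors ever created (a descriptor is added to $R$ only if it is not already in $U$), and a set $P$ of popped (GSS node, SPPF node) pairs. Initially $R$ contains one initial descriptor for each vertex in $V_s$. Processing a descriptor at slot $X\to\alpha\cdot x\beta$ at vertex $i$: if $x$ is a terminal, then for every outgoing edge $e$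 of $i$ with label $x$, the terminal SPPF node for $e$ is created/reused, combined with the current SPPF node, and a descriptor with slot $X\to\alpha x\cdot\beta$ and position the target of $e$ is added; if $x$ is a nonterminal, a GSS node for $(X\to\alpha x\cdot\beta, i)$ is created/reused (with an edge to the current GSS node labeled by the current SPPF node), and for every slot in the union, over outgoing edges $e$ of $i$, of the LL parse-table entries for $x$ and the label of $e$, a descriptor at position $i$ is added; at a slot $X\to\alpha\cdot$ the standard GLL pop operation is performed. All other operations (add, pop, create, SPPF node construction) are those of standard GLL. The algorithm terminates when $R$ is empty. The binarized SPPF: its nodes are of the following kinds, each created at most once per label: terminal nodes labeled $(v_0,T,v_1)$, created only when $(v_0,T,v_1)\in E$; $\varepsilon$-nodes labeled $(v,\varepsilon,v)$ with $v\in V$; nonterminal nodes labeled $(v_0,A,v_1)$ with $A\in N$, $v_0,v_1\in V$; intermediate nodes labeled $(v_0,t,v_1)$ with $t$ a grammar slot, $v_0,v_1\in V$; and packed nodes labeled $(A\to\alpha\cdot\beta, v)$ with $v\in V$, which are children of nonterminal or intermediate nodes and have at most two children. Nonterminal and intermediate nodes have only packed nodes as children. *)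

(* Defs.v *)
From Stdlib Require List.
From mathcomp Require Import all_boot.
Set Implicit Arguments. Unset Strict Implicit. Unset Printing Implicit Defensive.

Definition card_le {T : Type} (A : T -> Prop) (n : nat) : Prop :=
  exists l : seq T, size l <= n /\ forall x, A x -> List.In x l.

Section GLL.
(* Grammar G = (N, Sig, P, S): symbols are [inl a] (terminal) or [inr X]. *)
Variables (N Sig : finType) (P : seq (N * seq (Sig + N))) (S : N).
(* Graph M = (V, E, L): an edge (v, a, w) is [((v, a), w)]; E is a set, so
   there are no parallel edges with the same label. *)
Variables (V : finType) (E : {set V * Sig * V}) (Vs : {set V}).

Local Notation sym := (Sig + N)%type.
(* grammar slot X -> alpha . beta  is  ((X, alpha), beta) *)
Local Notation slot := (N * seq sym * seq sym)%type.

Inductive nullable_nt : N -> Prop :=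
| NullNT X g : (X, g) \in P -> nullable_seq g -> nullable_nt X
with nullable_seq : seq sym -> Prop :=
| NSnil : nullable_seq [::]
| NScons Y r : nullable_nt Y -> nullable_seq r -> nullable_seq (inr Y :: r).

Inductive first_nt (a : Sig) : N -> Prop :=
| FN X g : (X, g) \in P -> first_seq a g -> first_nt a X
with first_seq (a : Sig) : seq sym -> Prop :=
| FSt r : first_seq a (inl a :: r)
| FSn Y r : first_nt a Y -> first_seq a (inr Y :: r)
| FSskip Y r : nullable_nt Y -> first_seq a r -> first_seq a (inr Y :: r).

Inductive follow (a : Sig) : N -> Prop :=
| Fol1 Y al X be : (Y, al ++ inr X :: be) \in P -> first_seq a be -> follow a X
| Fol2 Y al X be : (Y, al ++ inr X :: be) \in P -> nullable_seq be ->
    follow a Y -> follow a X.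

(* LL(1) parse-table entry: slot X -> . g is in T[X, a] *)
Definition ll_table (X : N) (a : Sig) (g : seq sym) : Prop :=
  (X, g) \in P /\ (first_seq a g \/ (nullable_seq g /\ follow a X)).

Definition alts (i : V) (X : N) (g : seq sym) : Prop :=
  exists a j, ((i, a), j) \in E /\ ll_table X a g.

Inductive snode : Type :=
| STerm of V & Sig & V
| SEps of V
| SNT of V & N & V
| SInt of V & slot & V
| SPack of snode & slot & V.      (* packed child (t, k) of the given parent *)

Definition lext (n : snode) : V :=
  match n with
  | STerm v _ _ | SEps v | SNT v _ _ | SInt v _ _ => v
  | SPack _ _ k => k end.
Definition rext (n : snode) : V :=
  match n with
  | STerm _ _ v | SEps v | SNT _ _ v | SInt _ _ v => v
  | SPack _ _ k => k end.

Definition short (al : seq sym) : Prop :=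
  (exists a, al = [:: inl a]) \/ (exists Y, al = [:: inr Y] /\ ~ nullable_nt Y).

Definition ynode (t : slot) (w : option snode) (z : snode) : snode :=
  let q := match w with Some w' => lext w' | None => lext z end in
  match t.2 with
  | [::] => SNT q t.1.1 (rext z)
  | _ => SInt q t (rext z) end.
Definition pnode (t : slot) (w : option snode) (z : snode) : snode :=
  SPack (ynode t w z) t (lext z).

(* getNodeP(t, w, z) returns y, creating the nodes Ns and the edges Es
   (w = None is the dummy node $) *)
Inductive getNodeP (t : slot) (w : option snode) (z : snode) :
  snode -> (snode -> Prop) -> (snode * snode -> Prop) -> Prop :=
| GNP_skip : short t.1.2 -> t.2 <> [::] ->
    getNodeP t w z z (fun _ => False) (fun _ => False)
| GNP_make : ~ (short t.1.2 /\ t.2 <> [::]) ->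
    getNodeP t w z (ynode t w z)
      (fun n => n = ynode t w z \/ n = pnode t w z)
      (fun e => e = (ynode t w z, pnode t w z) \/ e = (pnode t w z, z) \/
                exists2 w', w = Some w' & e = (pnode t w z, w')).

(* GSS node: None is the base node u0, Some (L, i) the node labelled (L, i) *)
Definition gnode := option (slot * V).
(* descriptor label: None is the initial label (parse S), Some t a slot *)
Definition desc := (option slot * gnode * V * option snode)%type.

Record state := mkState {
  stR  : desc -> Prop;
  stU  : desc -> Prop;
  stP  : gnode * snode -> Prop;
  stGN : gnode -> Prop;
  stGE : gnode * option snode * gnode -> Prop;
  stSN : snode -> Prop;
  stSE : snode * snode -> Prop
}.

Definition empty {T : Type} : T -> Prop := fun _ => False.

Definition upd (s : state) (d : desc) (D : desc -> Prop)
  (Pn : gnode * snode -> Prop) (GNn : gnode -> Prop)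
  (GEn : gnode * option snode * gnode -> Prop)
  (Ns : snode -> Prop) (Es : snode * snode -> Prop) : state :=
  mkState (fun d' => (stR s d' /\ d' <> d) \/ (D d' /\ ~ stU s d'))
          (fun d' => stU s d' \/ D d')
          (fun p => stP s p \/ Pn p)
          (fun g => stGN s g \/ GNn g)
          (fun e => stGE s e \/ GEn e)
          (fun n => stSN s n \/ Ns n)
          (fun e => stSE s e \/ Es e).

Definition pop_desc (s : state) (u : gnode) (i : V) (z : snode) : desc -> Prop :=
  fun d' => exists L k, u = Some (L, k) /\
    exists w v y Ns Es, stGE s (u, w, v) /\ getNodeP L w z y Ns Es /\
      d' = (Some L, v, i, Some y).
Definition pop_P (u : gnode) (z : snode) : gnode * snode -> Prop :=
  fun p => u <> None /\ p = (u, z).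
Definition pop_N (s : state) (u : gnode) (z : snode) : snode -> Prop :=
  fun n => exists L k, u = Some (L, k) /\
    exists w v y Ns Es, stGE s (u, w, v) /\ getNodeP L w z y Ns Es /\ Ns n.
Definition pop_E (s : state) (u : gnode) (z : snode) : snode * snode -> Prop :=
  fun e => exists L k, u = Some (L, k) /\
    exists w v y Ns Es, stGE s (u, w, v) /\ getNodeP L w z y Ns Es /\ Es e.

Inductive process (s : state) : desc -> state -> Prop :=
| P_start u i w :
    process s (None, u, i, w)
      (upd s (None, u, i, w)
         (fun d' => exists2 g, alts i S g & d' = (Some ((S, [::]), g), u, i, None))
         empty empty empty empty empty)
| P_term X al a be u i w :
    let t' := ((X, rcons al (inl a)), be) in
    process s (Some ((X, al), inl a :: be), u, i, w)
      (upd s (Some ((X, al), inl a :: be), u, i, w)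
         (fun d' => exists j y Ns Es, ((i, a), j) \in E /\
             getNodeP t' w (STerm i a j) y Ns Es /\ d' = (Some t', u, j, Some y))
         empty empty empty
         (fun n => exists j y Ns Es, ((i, a), j) \in E /\
             getNodeP t' w (STerm i a j) y Ns Es /\ (n = STerm i a j \/ Ns n))
         (fun e => exists j y Ns Es, ((i, a), j) \in E /\
             getNodeP t' w (STerm i a j) y Ns Es /\ Es e))
| P_nonterm X al x be u i w :
    let t' := ((X, rcons al (inr x)), be) in
    let v : gnode := Some (t', i) in
    (* create(t', u, i, w): replay the popped pairs of v only if the
       GSS edge (v, w, u) is new *)
    let replay := ~ stGE s (v, w, u) in
    process s (Some ((X, al), inr x :: be), u, i, w)
      (upd s (Some ((X, al), inr x :: be), u, i, w)
         (fun d' =>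
            (replay /\ exists z y Ns Es, stP s (v, z) /\ getNodeP t' w z y Ns Es /\
                 d' = (Some t', u, rext z, Some y))
            \/ (exists2 g, alts i x g & d' = (Some ((x, [::]), g), v, i, None)))
         empty
         (fun g => g = v)
         (fun e => e = (v, w, u))
         (fun n => replay /\ exists z y Ns Es, stP s (v, z) /\
                     getNodeP t' w z y Ns Es /\ Ns n)
         (fun e => replay /\ exists z y Ns Es, stP s (v, z) /\
                     getNodeP t' w z y Ns Es /\ Es e))
| P_end_eps X al u i y Ns Es :
    getNodeP ((X, al), [::]) None (SEps i) y Ns Es ->
    process s (Some ((X, al), [::]), u, i, None)
      (upd s (Some ((X, al), [::]), u, i, None)
         (pop_desc s u i y) (pop_P u y) empty empty
         (fun n => n = SEps i \/ Ns n \/ pop_N s u y n)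
         (fun e => Es e \/ pop_E s u y e))
| P_end X al u i z :
    process s (Some ((X, al), [::]), u, i, Some z)
      (upd s (Some ((X, al), [::]), u, i, Some z)
         (pop_desc s u i z) (pop_P u z) empty empty
         (pop_N s u z) (pop_E s u z)).

Definition init_state : state :=
  mkState (fun d => exists2 v, v \in Vs & d = (None, None, v, None))
          (fun d => exists2 v, v \in Vs & d = (None, None, v, None))
          empty (fun g => g = None) empty empty empty.

Definition step (s s' : state) : Prop :=
  exists2 d, stR s d & process s d s'.

(* states reachable during a run of the algorithm (any order of
   processing the descriptors of R) *)
Inductive reachable : state -> Prop :=
| Reach0 : reachable init_state
| ReachS s s' : reachable s -> step s s' -> reachable s'.

End GLL.

(* Main.v *)
Require Import Defs.
From mathcomp Require Import all_boot.
Set Implicit Arguments. Unset Strict Implicit. Unset Printing Implicit Defensive.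

Definition fm {A B : Type} (f : A -> seq B) (l : seq A) : seq B :=
  foldr (fun x acc => f x ++ acc) [::] l.

Lemma In_fm {A B : Type} (f : A -> seq B) l x y :
  List.In x l -> List.In y (f x) -> List.In y (fm f l).
Proof.
elim: l => //= a l IH [->|H] Hy; apply: List.in_or_app; first by left.
by right; apply: IH.
Qed.

Lemma size_fm {A B : Type} (f : A -> seq B) l m :
  (forall x, size (f x) <= m) -> size (fm f l) <= size l * m.
Proof.
move=> H; elim: l => //= a l IH; rewrite size_cat mulSn leq_add //.
Qed.

Lemma In_map' {A B : Type} (f : A -> B) l x : List.In x l -> List.In (f x) (map f l).
Proof. elim: l => //= a l IH [->|H]; [by left | by right; apply: IH]. Qed.

Lemma In_catl {A : Type} (l1 l2 : seq A) x : List.In x l1 -> List.In x (l1 ++ l2).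
Proof. by move=> H; apply: List.in_or_app; left. Qed.
Lemma In_catr {A : Type} (l1 l2 : seq A) x : List.In x l2 -> List.In x (l1 ++ l2).
Proof. by move=> H; apply: List.in_or_app; right. Qed.

Lemma In_mem {T : eqType} (x : T) (s : seq T) : x \in s -> List.In x s.
Proof.
elim: s => //= a s IH; rewrite in_cons => /orP [/eqP ->|H]; [by left | by right; apply: IH].
Qed.
Section Pf.
Variables (N Sig : finType) (P : seq (N * seq (Sig + N))) (S : N).
Variables (V : finType) (E : {set V * Sig * V}) (Vs : {set V}).
Local Notation sym := (Sig + N)%type.
Local Notation slot := (N * seq sym * seq sym)%type.
Local Notation snode := (snode N Sig V).

Definition valid (t : slot) : Prop := (t.1.1, t.1.2 ++ t.2) \in P.

Definition NP (n : snode) : Prop :=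
  match n with
  | STerm i a j => ((i, a), j) \in E
  | SEps _ => True
  | SNT _ _ _ => True
  | SInt _ t _ => valid t
  | SPack _ _ _ => False end.

Definition yn (t : slot) (q r : V) : snode :=
  match t.2 with [::] => SNT Sig q t.1.1 r | _ => SInt q t r end.

Definition PK (n : snode) : Prop :=
  exists t q r k, valid t /\ n = SPack (yn t q r) t k.

Definition GEd (e : snode * snode) : Prop :=
  exists t q r k, valid t /\
    (e = (yn t q r, SPack (yn t q r) t k) \/
     (exists z, NP z /\ lext z = k /\ rext z = r /\ e = (SPack (yn t q r) t k, z)) \/
     (exists w, NP w /\ lext w = q /\ rext w = k /\ e = (SPack (yn t q r) t k, w))).

Definition pos_ok (w : option snode) (i k : V) : Prop :=
  match w with None => i = k | Some w' => lext w' = k end.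

Definition desc_ok (d : desc N Sig V) : Prop :=
  let '(l, u, i, w) := d in
  match l with
  | None => u = None
  | Some t => valid t /\ (t.1.2 = [::] -> w = None) /\
      (forall w', w = Some w' -> NP w' /\ rext w' = i) /\
      (forall L k, u = Some (L, k) -> pos_ok w i k)
  end.

Definition P_ok (p : gnode N Sig V * snode) : Prop :=
  exists L k, p.1 = Some (L, k) /\ NP p.2 /\ lext p.2 = k.

Definition ge_ok (e : gnode N Sig V * option snode * gnode N Sig V) : Prop :=
  let '(u, w, v) := e in
  exists L k, u = Some (L, k) /\ valid L /\ L.1.2 <> [::] /\
    (size L.1.2 = 1 -> w = None) /\
    (forall w', w = Some w' -> NP w' /\ rext w' = k) /\
    (forall L' k', v = Some (L', k') -> pos_ok w k k').

Definition Inv (s : state N Sig V) : Prop :=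
  (forall d, stR s d -> desc_ok d) /\ (forall p, stP s p -> P_ok p) /\
  (forall e, stGE s e -> ge_ok e) /\ (forall n, stSN s n -> NP n \/ PK n) /\
  (forall e, stSE s e -> GEd e).

Lemma gnp_ok t w z y Ns Es :
  getNodeP P t w z y Ns Es -> valid t -> NP z ->
  (forall w', w = Some w' -> NP w' /\ rext w' = lext z) ->
  (size t.1.2 = 1 -> w = None) ->
  [/\ NP y, rext y = rext z,
      lext y = (match w with Some w' => lext w' | None => lext z end),
      (forall n, Ns n -> NP n \/ PK n) & (forall e, Es e -> GEd e)].
Proof.
case=> [Hs Hb|Hn] Hv Hz Hw H1.
- have -> : w = None by apply: H1; case: Hs => [[a ->]|[Y [-> _]]].
  by split.
- set q := match w with Some w' => lext w' | None => lext z end.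
  have Ey : ynode t w z = yn t q (rext z) by [].
  have Ep : pnode t w z = SPack (yn t q (rext z)) t (lext z) by [].
  have NPy : NP (yn t q (rext z)).
    by rewrite /yn; case: t.2 Hv => //.
  split.
  + by rewrite Ey.
  + by rewrite Ey /yn; case: t.2.
  + by rewrite Ey /yn; case: t.2.
  + move=> n [->|->]; first by left; rewrite Ey.
    by right; exists t, q, (rext z), (lext z); rewrite Ep.
  + move=> e He; exists t, q, (rext z), (lext z); split => //.
    case: He => [->|[->|[w' Hw' ->]]]; first by left; rewrite Ey Ep.
    * by right; left; exists z; rewrite Ep.
    * right; right; exists w'; have [? ?] := Hw w' Hw'; rewrite Ep; split => //.
      by split; [rewrite /q Hw' | split].
Qed.
Lemma ge_facts L k w v : ge_ok (Some (L, k), w, v) ->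
  [/\ valid L, L.1.2 <> [::], (size L.1.2 = 1 -> w = None),
      (forall w', w = Some w' -> NP w' /\ rext w' = k) &
      (forall L' k', v = Some (L', k') -> pos_ok w k k')].
Proof. by case=> L0 [k0 [[<- <-] [? [? [? [? ?]]]]]]. Qed.

Lemma gnp_lext L w z k y Ns Es : getNodeP P L w z y Ns Es -> 
  (forall w', w = Some w' -> NP w' /\ rext w' = k) -> lext z = k ->
  (size L.1.2 = 1 -> w = None) -> valid L -> NP z ->
  [/\ NP y, rext y = rext z, (forall k', pos_ok w k k' -> lext y = k'),
      (forall n, Ns n -> NP n \/ PK n) & (forall e, Es e -> GEd e)].
Proof.
move=> G Hw Hz H1 Hv HNz.
have Hw2 : forall w', w = Some w' -> NP w' /\ rext w' = lext z.
  by move=> w' /Hw [? ->].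
have [NPy Ry Ly HN HE] := gnp_ok G Hv HNz Hw2 H1.
split => // k'.
by rewrite Ly; case: (w) => [w'|] /= <-.
Qed.

Lemma pop_ok s u i z :
  (forall e, stGE s e -> ge_ok e) -> NP z -> rext z = i ->
  (forall L k, u = Some (L, k) -> lext z = k) ->
  [/\ (forall d, pop_desc P s u i z d -> desc_ok d),
      (forall p, pop_P u z p -> P_ok p),
      (forall n, pop_N P s u z n -> NP n \/ PK n) &
      (forall e, pop_E P s u z e -> GEd e)].
Proof.
move=> HG Hz Ri Lz; split.
- move=> d [L [k [Eu [w [v [y [Ns [Es [Hge [G ->]]]]]]]]]].
  subst u; have [Hv Hne H1 Hw Hp] := ge_facts (HG _ Hge).
  have [NPy Ry Ly _ _] := gnp_lext G Hw (Lz _ _ erefl) H1 Hv Hz.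
  split => //; split => //; split; first by move=> w' [<-]; rewrite Ry.
  by move=> L' k' /Hp /Ly.
- move=> p [Hu ->]; case: u Hu Lz => [[L k]|] // _ Lz.
  by exists L, k; split => //; split => //; apply: Lz.
- move=> n [L [k [Eu [w [v [y [Ns [Es [Hge [G HN]]]]]]]]]].
  subst u; have [Hv Hne H1 Hw Hp] := ge_facts (HG _ Hge).
  by have [_ _ _ HNs _] := gnp_lext G Hw (Lz _ _ erefl) H1 Hv Hz; apply: HNs.
- move=> e [L [k [Eu [w [v [y [Ns [Es [Hge [G HE]]]]]]]]]].
  subst u; have [Hv Hne H1 Hw Hp] := ge_facts (HG _ Hge).
  by have [_ _ _ _ HEs] := gnp_lext G Hw (Lz _ _ erefl) H1 Hv Hz; apply: HEs.
Qed.
Lemma upd_ok s d D Pn GNn GEn Ns Es : Inv s ->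
  (forall d', D d' -> desc_ok d') -> (forall p, Pn p -> P_ok p) ->
  (forall e, GEn e -> ge_ok e) -> (forall n, Ns n -> NP n \/ PK n) ->
  (forall e, Es e -> GEd e) -> Inv (upd s d D Pn GNn GEn Ns Es).
Proof.
move=> [H1 [H2 [H3 [H4 H5]]]] K1 K2 K3 K4 K5; split; rewrite /=.
  by move=> d' [[/H1 ? _]|[/K1 ? _]].
split; first by move=> p [/H2|/K2].
split; first by move=> e [/H3|/K3].
split; first by move=> n [/H4|/K4].
by move=> e [/H5|/K5].
Qed.

Lemma valid_next X al x be : valid ((X, al), x :: be) -> valid ((X, rcons al x), be).
Proof. by rewrite /valid /= cat_rcons. Qed.

Lemma size_rcons1 (al : seq sym) x : size (rcons al x) = 1 -> al = [::].
Proof. by rewrite size_rcons; case: al. Qed.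

Lemma rcons_nn (al : seq sym) x : rcons al x <> [::].
Proof. by case: al. Qed.

Lemma alts_valid i X g : alts P E i X g -> valid ((X, [::]), g).
Proof. by case=> a [j [_ [H _]]]. Qed.

Lemma step_ok s d s' : Inv s -> stR s d -> process P S E s d s' -> Inv s'.
Proof.
move=> Is Hd Hp; have [HR [HP [HG _]]] := Is.
have Dd := HR _ Hd.
case: Hp Dd.
-
  move=> u i w /= ->; apply: upd_ok => //.
  move=> d' [g /alts_valid Hv ->] /=; split => //; split => //; split => //.
-
  move=> X al a be u i w t' /= [Hv [Hnil [Hw Hpos]]].
  have Hv' : valid t' by apply: valid_next.
  have H1 : size t'.1.2 = 1 -> w = None by move=> /size_rcons1 /Hnil.
  have G j y Ns Es : ((i, a), j) \in E -> getNodeP P t' w (STerm N i a j) y Ns Es ->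
    [/\ NP y, rext y = j, (forall k', pos_ok w i k' -> lext y = k'),
      (forall n, Ns n -> NP n \/ PK n) & (forall e, Es e -> GEd e)].
    by move=> He Gn; apply: (gnp_lext Gn Hw).
  apply: upd_ok => //.
  + move=> d' [j [y [Ns [Es [He [Gn ->]]]]]].
    have [NPy Ry Ly _ _] := G _ _ _ _ He Gn.
    split => //; split; first by move=> /rcons_nn.
    split; first by move=> w' [<-].
    by move=> L k /Hpos /Ly.
  + move=> n [j [y [Ns [Es [He [Gn [->|HN]]]]]]]; first by left.
    by have [_ _ _ HNs _] := G _ _ _ _ He Gn; apply: HNs.
  + move=> e [j [y [Ns [Es [He [Gn HE]]]]]].
    by have [_ _ _ _ HEs] := G _ _ _ _ He Gn; apply: HEs.
-
  move=> X al x be u i w t' v replay /= [Hv [Hnil [Hw Hpos]]].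
  have Hv' : valid t' by apply: valid_next.
  have H1 : size t'.1.2 = 1 -> w = None by move=> /size_rcons1 /Hnil.
  have G z y Ns Es : stP s (v, z) -> getNodeP P t' w z y Ns Es ->
    [/\ NP y, rext y = rext z, (forall k', pos_ok w i k' -> lext y = k'),
      (forall n, Ns n -> NP n \/ PK n) & (forall e, Es e -> GEd e)].
    move=> /HP [L [k [Ev [NPz Lz]]]] Gn.
    have Eik : k = i by move: Ev; rewrite /v /= => -[_ ->].
    by rewrite Eik in Lz; apply: (gnp_lext Gn Hw Lz).
  apply: upd_ok => //.
  + move=> d' [[_ [z [y [Ns [Es [Hz [Gn ->]]]]]]]|[g /alts_valid Hg ->]].
    * have [NPy Ry Ly _ _] := G _ _ _ _ Hz Gn.
      split => //; split; first by move=> /rcons_nn.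
      split; first by move=> w' [<-].
      by move=> L k /Hpos /Ly.
    * split => //; split => //; split => //.
      by move=> L k; rewrite /v => -[_ ->].
  + move=> e -> /=; exists t', i; split => //; split => //; split; first exact: rcons_nn.
    by split.
  + move=> n [_ [z [y [Ns [Es [Hz [Gn HN]]]]]]].
    by have [_ _ _ HNs _] := G _ _ _ _ Hz Gn; apply: HNs.
  + move=> e [_ [z [y [Ns [Es [Hz [Gn HE]]]]]]].
    by have [_ _ _ _ HEs] := G _ _ _ _ Hz Gn; apply: HEs.
-
  move=> X al u i y Ns Es Gn /= [Hv [_ [_ Hpos]]].
  have [NPy Ry Ly HNs HEs] := gnp_lext Gn (k := i) (fun w' (H : None = Some w') => match H with end)
     erefl (fun _ => erefl) Hv I.
  have Lz : forall L k, u = Some (L, k) -> lext y = k by move=> L k /Hpos /Ly.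
  have [K1 K2 K3 K4] := pop_ok HG NPy Ry Lz.
  apply: upd_ok => //.
  + by move=> n [->|[/HNs|/K3]] //; left.
  + by move=> e [/HEs|/K4].
-
  move=> X al u i z /= [Hv [_ [Hw Hpos]]].
  have [NPz Rz] := Hw z erefl.
  have Lz : forall L k, u = Some (L, k) -> lext z = k by move=> L k /Hpos.
  have [K1 K2 K3 K4] := pop_ok HG NPz Rz Lz.
  by apply: upd_ok.
Qed.
Lemma reach_ok s : reachable P S E Vs s -> Inv s.
Proof.
elim => [|s0 s1 _ IH [d Hd Hp]]; last exact: step_ok IH Hd Hp.
split; first by move=> d [v _ ->].
by split; [|split; [|split]] => //=.
Qed.

Definition SL : seq slot :=
  fm (fun p => map (fun n => ((p.1, take n p.2), drop n p.2)) (iota 0 (size p.2).+1)) P.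

Lemma SL_in t : valid t -> List.In t SL.
Proof.
case: t => [[X al] be]; rewrite /valid /= => H.
rewrite /SL; apply: (In_fm (x := (X, al ++ be))); first exact: In_mem H.
have Hn : List.In (size al) (iota 0 (size (al ++ be)).+1).
  by apply: In_mem; rewrite mem_iota add0n ltnS size_cat leq_addr.
have H2 := In_map' (fun n => ((X, take n (al ++ be)), drop n (al ++ be))) Hn.
cbv beta in H2.
have E1 : ((X, take (size al) (al ++ be)), drop (size al) (al ++ be)) = ((X, al), be).
  by rewrite take_size_cat // drop_size_cat.
by rewrite E1 in H2.
Qed.

Lemma V_in (v : V) : List.In v (enum V).
Proof. by apply: In_mem; rewrite mem_enum. Qed.

Definition NPat (k r : V) : seq snode :=
  map (fun a => STerm N k a r) (enum Sig) ++
  SEps N Sig k :: map (fun X => SNT Sig k X r) (enum N) ++ map (fun t => SInt k t r) SL.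

Lemma NPat_in z : NP z -> List.In z (NPat (lext z) (rext z)).
Proof.
case: z => //=.
- move=> i a j _; apply: In_catl; apply: In_map'; apply: In_mem; rewrite mem_enum //.
- by move=> v _; apply: In_catr; left.
- move=> q X r _; apply: In_catr; right; apply: In_catl; apply: In_map'.
  by apply: In_mem; rewrite mem_enum.
- move=> q t r Hv; apply: In_catr; right; apply: In_catr; apply: In_map'.
  exact: SL_in.
Qed.

Definition mm := #|Sig| + (#|N| + size SL).+1.

Lemma size_NPat k r : size (NPat k r) = mm.
Proof. by rewrite /NPat /mm size_cat /= size_cat !size_map -!enumT -!cardT. Qed.

Definition NodeL : seq snode :=
  fm (fun k => fm (fun r => NPat k r) (enum V)) (enum V) ++
  fm (fun t => fm (fun q => fm (fun r => map (fun k => SPack (yn t q r) t k) (enum V))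
     (enum V)) (enum V)) SL.

Definition EdgeL : seq (snode * snode) :=
  fm (fun t => fm (fun q => fm (fun r => fm (fun k =>
     (yn t q r, SPack (yn t q r) t k) ::
     map (fun z => (SPack (yn t q r) t k, z)) (NPat k r) ++
     map (fun w => (SPack (yn t q r) t k, w)) (NPat q k)) (enum V)) (enum V)) (enum V)) SL.

Lemma NodeL_in n : NP n \/ PK n -> List.In n NodeL.
Proof.
case=> [H|[t [q [r [k [Hv ->]]]]]].
- rewrite /NodeL; apply: In_catl; apply: (In_fm (V_in (lext n))); apply: (In_fm (V_in (rext n))).
  exact: NPat_in.
- rewrite /NodeL; apply: In_catr; apply: (In_fm (SL_in Hv)); apply: (In_fm (V_in q)).
  apply: (In_fm (V_in r)); apply: In_map'; exact: V_in.
Qed.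

Lemma EdgeL_in e : GEd e -> List.In e EdgeL.
Proof.
case=> t [q [r [k [Hv He]]]].
rewrite /EdgeL; apply: (In_fm (SL_in Hv)); apply: (In_fm (V_in q)).
apply: (In_fm (V_in r)); apply: (In_fm (V_in k)).
case: He => [->|[[z [Hz [Lz [Rz ->]]]]|[w [Hw [Lw [Rw ->]]]]]]; first by left.
- right; apply: In_catl; apply: In_map'; rewrite -Lz -Rz; exact: NPat_in.
- right; apply: In_catr; apply: In_map'; rewrite -Lw -Rw; exact: NPat_in.
Qed.

Lemma size_NodeL : size NodeL <= size (enum V) * (size (enum V) * mm) +
   size SL * (size (enum V) * (size (enum V) * (size (enum V) * 1))).
Proof.
rewrite size_cat leq_add //.
- apply: size_fm => k; apply: size_fm => r; by rewrite size_NPat.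
- apply: size_fm => t; apply: size_fm => q; apply: size_fm => r.
  by rewrite size_map muln1.
Qed.

Lemma size_EdgeL : size EdgeL <=
  size SL * (size (enum V) * (size (enum V) * (size (enum V) * (mm + mm).+1))).
Proof.
apply: size_fm => t; apply: size_fm => q; apply: size_fm => r.
apply: size_fm => k; by rewrite /= size_cat !size_map !size_NPat.
Qed.

Lemma size_enumV : size (enum V) = #|V|.
Proof. by rewrite cardT. Qed.
End Pf.
From mathcomp Require Import zify.
Lemma cube_le (n : nat) : n * n <= n ^ 3.
Proof. case: n => // n; by rewrite !expnS expn0 muln1 leq_pmull. Qed.

Theorem theorem2 (N Sig : finType) (P : seq (N * seq (Sig + N))) (S : N) :
  exists c : nat,
    forall (V : finType) (E : {set V * Sig * V}) (Vs Vf : {set V})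
           (s : state N Sig V),
      reachable P S E Vs s ->
      card_le (stSN s) (c * (#|V| ^ 3 + #|E|)) /\
      card_le (stSE s) (c * (#|V| ^ 3 + #|E|)).
Proof.
exists (mm P + size (SL P) * (mm P + mm P).+1).
move=> V E Vs Vf s Hr; have [_ [_ [_ [HN HE]]]] := reach_ok Hr.
have Hc := cube_le #|V|.
set m := mm P in Hc *; set sl := size (SL P) in Hc *.
split.
- exists (NodeL P V); split; last by move=> n /HN /NodeL_in.
  apply: leq_trans (size_NodeL P V) _; rewrite size_enumV -/m -/sl.
  have -> : #|V| * (#|V| * (#|V| * 1)) = #|V| ^ 3 by rewrite !expnS expn0.
  nia.
- exists (EdgeL P V); split; last by move=> e /HE /EdgeL_in.
  apply: leq_trans (size_EdgeL P V) _; rewrite size_enumV -/m -/sl.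
  have -> : #|V| * (#|V| * (#|V| * (m + m).+1)) = #|V| ^ 3 * (m + m).+1 by rewrite !expnS expn0 muln1 !mulnA.
  nia.
Qed.
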